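(* Under the hypotheses of the fidelity statement (that is: $\mathbf{X}\in[0,1]^{m\times 2n}$ with $n$ $(key,value)$ column pairs, $\delta\in(0,1)$, $b\ge\lceil\log_2(mn/\delta)\rceil$, and $\mathbf{X}_w$ obtained by keeping $key$ columns and moving each $value$ entry into the nearest (in interval index) green interval among $I_j=[\tfrac{j-1}{b},\tfrac{j}{b}]$, each interval green independently with probability $\tfrac12$ for each entry), for every $p\ge 1$, with probability at least $1-\delta$, $$\mathcal{W}_p(F_{\mathbf{X}},F_{\mathbf{X}_w})\le \frac{\sqrt{2n}\,\lceil\log_2(mn/\delta)\rceil}{b}.$$
   Context: $F_{\mathbf{X}}$ (resp. $F_{\mathbf{X}_w}$) denotes the empirical distribution on $\mathbb{R}^{2n}$ placing mass $1/m$ on each row of $\mathbf{X}$ (resp. $\mathbf{X}_w$), and $\mathcal{W}_p$ is the $p$-Wasserstein distance with respect to the Euclidean norm on $\mathbb{R}^{2n}$. *)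

(* Defs.v *)
From HB Require Import structures.
From mathcomp Require Import all_boot all_order all_algebra.
From mathcomp Require Import all_classical all_reals all_analysis.
Set Implicit Arguments. Unset Strict Implicit. Unset Printing Implicit Defensive.
Import Order.TTheory GRing.Theory Num.Theory.
Local Open Scope classical_set_scope.
Local Open Scope ring_scope.

(* A data matrix with n (key,value) column pairs is 'M_(m, n + n):
   column [lshift n k] is the key of pair k, column [rshift n k] its value. *)

Definition rowdist (R : realType) (m d : nat) (X Y : 'M[R]_(m, d)) (i j : 'I_m) : R :=
  Num.sqrt (\sum_(c < d) (X i c - Y j c) ^+ 2).

(* Couplings of the two empirical distributions (mass 1/m on each row),
   written as transport plans between the row indices. *)
Definition coupling (R : realType) (m : nat) (P : 'M[R]_(m, m)) : Prop :=
  (forall i j, 0 <= P i j) /\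
  (forall i, \sum_(j < m) P i j = m%:R^-1) /\
  (forall j, \sum_(i < m) P i j = m%:R^-1).

Definition Wp (R : realType) (p : R) (m d : nat) (X Y : 'M[R]_(m, d)) : R :=
  (inf [set c | exists P, coupling P /\
          c = \sum_(i < m) \sum_(j < m) P i j * (rowdist X Y i j) `^ p]) `^ p^-1.

(* Index (0-based) of the interval I_{j+1} = [j/b, (j+1)/b] containing x in [0,1];
   half-open convention [j/b,(j+1)/b), with x = 1 put in the last interval. *)
Definition interval_index (R : realType) (b : nat) (x : R) : nat :=
  minn b.-1 (Num.truncn (x * b%:R)).

Definition natdist (a c : nat) : nat := (a - c) + (c - a).

(* Green lists: for every entry (row i, value column k) a set of green intervals. *)
Definition greenConfig (m n b : nat) := {ffun 'I_m * 'I_n -> {set 'I_b}}.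

Definition valid_watermark (R : realType) (m n b : nat)
    (X Xw : 'M[R]_(m, n + n)) (G : greenConfig m n b) : Prop :=
  forall (i : 'I_m) (k : 'I_n),
    Xw i (lshift n k) = X i (lshift n k) /\
    (let x := X i (rshift n k) in
     let y := Xw i (rshift n k) in
     let t := interval_index b x in
     if G (i, k) == finset.set0 then y = x
     else exists2 g : 'I_b, g \in G (i, k) &
            (forall g' : 'I_b, g' \in G (i, k) -> (natdist g t <= natdist g' t)%N) /\
            (g%:R / b%:R <= y <= (g.+1)%:R / b%:R)).

(* Probability under independent fair green/red choices for every interval of
   every entry, i.e. the uniform distribution on green configurations. *)
Definition prob_green (R : realType) (m n b : nat) (E : {pred greenConfig m n b}) : R :=
  #|E|%:R / #|greenConfig m n b|%:R.

Definition ceil_log2 (R : realType) (y : R) : int := Num.ceil (ln y / ln 2).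

(* Main.v *)
Require Import Defs.
From HB Require Import structures.
From mathcomp Require Import all_boot all_order all_algebra.
From mathcomp Require Import all_classical all_reals all_analysis.
From mathcomp Require Import lra zify.
Import Order.TTheory GRing.Theory Num.Theory.
Local Open Scope ring_scope.

Lemma union_bound (T I : finType) (P : I -> T -> bool) (s : seq I) :
  (#|[set x | has (fun e => P e x) s]| <= \sum_(e <- s) #|[set x | P e x]|)%N.
Proof.
elim: s => [|a s IH].
  by rewrite big_nil (_ : [set x | _] = finset.set0) ?cards0 //; apply/setP => x; rewrite !inE.
rewrite big_cons (_ : [set x | _] = [set x | P a x] :|: [set x | has (fun e => P e x) s]).
  by apply: leq_trans (leq_card_setU _ _) _; rewrite leq_add2l.
by apply/setP => x; rewrite !inE.
Qed.

Lemma count_bad (aT T : finType) (e : aT) (W : {set T}) :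
  (#|[set G : {ffun aT -> {set T}} | G e :&: W == finset.set0]| * 2 ^ #|W|
     <= #|{ffun aT -> {set T}}|)%N.
Proof.
set Bad := [set G : {ffun aT -> {set T}} | G e :&: W == finset.set0].
pose f := fun GS : {ffun aT -> {set T}} * {set T} =>
  [ffun x => if x == e then GS.1 x :|: GS.2 else GS.1 x].
rewrite -card_powerset -cardsX -(card_in_imset (f := f)).
  by rewrite -cardsT subset_leq_card // subsetT.
move=> [G S] [G' S']; rewrite !inE /= => /andP[HG HS] /andP[HG' HS'] Heq.
have Hx : forall x, (if x == e then G x :|: S else G x) = (if x == e then G' x :|: S' else G' x).
  by move=> x; have := congr1 (fun F : {ffun aT -> {set T}} => F x) Heq; rewrite /f !ffunE.
have He := Hx e; rewrite eqxx in He.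
have dG : forall z, z \in W -> z \notin G e.
  by move=> z zW; apply/negP => zG; move: HG => /eqP/setP/(_ z); rewrite !inE zG zW.
have dG' : forall z, z \in W -> z \notin G' e.
  by move=> z zW; apply/negP => zG; move: HG' => /eqP/setP/(_ z); rewrite !inE zG zW.

have HSS : S = S'.
  apply/setP => z; move/setP: He => /(_ z); rewrite !inE.
  case zW: (z \in W).
    by rewrite (negbTE (dG z zW)) (negbTE (dG' z zW)).
  have nS : z \notin S by apply/negP => /(fintype.subsetP HS); rewrite zW.
  have nS' : z \notin S' by apply/negP => /(fintype.subsetP HS'); rewrite zW.
  by rewrite (negbTE nS) (negbTE nS') !orbF.
have HGG : G = G'.
  apply/ffunP => x; have := Hx x; case: eqP => [->|] // _.
  apply/setP => z; move/setP: He => /(_ z); rewrite !inE.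
  case zW: (z \in W).
    by rewrite (negbTE (dG z zW)) (negbTE (dG' z zW)).
  have nS : z \notin S by apply/negP => /(fintype.subsetP HS); rewrite zW.
  have nS' : z \notin S' by apply/negP => /(fintype.subsetP HS'); rewrite zW.
  by rewrite (negbTE nS) (negbTE nS') !orbF.
by rewrite HSS HGG.
Qed.
Lemma Wp_bound (R : realType) (p : R) (m d : nat) (X Y : 'M[R]_(m, d)) (D : R) :
  (0 < m)%N -> 1 <= p -> 0 <= D ->
  (forall i c, `|X i c - Y i c| <= D) ->
  Wp p X Y <= Num.sqrt d%:R * D.
Proof.
move=> m0 p1 D0 HD.
set D' := Num.sqrt d%:R * D.
have D'0 : 0 <= D' by rewrite mulr_ge0 ?sqrtr_ge0.
have rd : forall i, rowdist X Y i i <= D'.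
  move=> i; rewrite /rowdist /D'.
  have -> : Num.sqrt d%:R * D = Num.sqrt (\sum_(c < d) D ^+ 2).
    rewrite sumr_const card_ord (_ : D ^+ 2 *+ d = D ^+ 2 * d%:R); last by rewrite mulr_natr.
    by rewrite sqrtrM ?sqr_ge0 // sqrtr_sqr ger0_norm // mulrC.
  apply: ler_wsqrtr; apply: ler_sum => c _.
  have := HD i c; rewrite ler_norml => /andP[h1 h2]; nra.
have rd0 : forall i j, 0 <= rowdist X Y i j by move=> i j; rewrite sqrtr_ge0.
pose P : 'M[R]_(m, m) := \matrix_(i, j) (if i == j then m%:R^-1 else 0).
have mpos : 0 < m%:R^-1 :> R by rewrite invr_gt0 ltr0n.
have cP : coupling P.
  split; first by move=> i j; rewrite mxE; case: eqP => _ //; exact: ltW.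
  split.
    move=> i; rewrite (bigD1 i) //= mxE eqxx big1 ?addr0 // => j /negbTE.
    by rewrite mxE eq_sym => ->.
  move=> j; rewrite (bigD1 j) //= mxE eqxx big1 ?addr0 // => i /negbTE.
  by rewrite mxE => ->.
rewrite /Wp.
set S := (X in inf X).
have S0 : forall c, S c -> 0 <= c.
  move=> c [Q [[Q0 _] ->]]; apply: sumr_ge0 => i _; apply: sumr_ge0 => j _.
  by rewrite mulr_ge0 ?powR_ge0.
have SP : S (\sum_(i < m) \sum_(j < m) P i j * (rowdist X Y i j) `^ p) by exists P.
have le1 : \sum_(i < m) \sum_(j < m) P i j * (rowdist X Y i j) `^ p <= D' `^ p.
  have -> : \sum_(i < m) \sum_(j < m) P i j * (rowdist X Y i j) `^ p
     = \sum_(i < m) m%:R^-1 * (rowdist X Y i i) `^ p.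
    apply: eq_bigr => i _; rewrite (bigD1 i) //= mxE eqxx big1 ?addr0 // => j /negbTE.
    by rewrite mxE eq_sym => ->; rewrite mul0r.
  apply: le_trans (_ : \sum_(i < m) m%:R^-1 * D' `^ p <= _).
    apply: ler_sum => i _; rewrite ler_pM2l //.
    by apply: ge0_ler_powR; rewrite ?nnegrE ?rd0 //; lra.
  rewrite sumr_const card_ord.
  have -> : (m%:R^-1 * D' `^ p) *+ m = m%:R * (m%:R^-1 * D' `^ p) by rewrite mulr_natl.
  by rewrite mulrA mulfV ?mul1r // pnatr_eq0 -lt0n.
have infle : inf S <= D' `^ p.
  apply: le_trans le1; apply: ge_inf => //; exists 0 => c /S0 //.
have inf0 : 0 <= inf S by apply: lb_le_inf; [exact: (ex_intro _ _ SP) | move=> c /S0].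
apply: le_trans (_ : (D' `^ p) `^ p^-1 <= _).
  apply: ge0_ler_powR; rewrite ?nnegrE ?invr_ge0 ?powR_ge0 //; lra.
rewrite -powRrM mulfV ?powRr1 //; lra.
Qed.
Lemma index_bounds (R : realType) (b : nat) (x : R) :
  (0 < b)%N -> 0 <= x <= 1 ->
  (interval_index b x < b)%N /\
  (interval_index b x)%:R <= x * b%:R <= (interval_index b x).+1%:R.
Proof.
case: b => [//|b'] _ /andP[x0 x1]; rewrite /interval_index succnK.
have xb0 : 0 <= x * b'.+1%:R by rewrite mulr_ge0.
have xb1 : x * b'.+1%:R <= b'.+1%:R by rewrite -[leRHS]mul1r ler_pM2r // ltr0n.
case: (leqP (Num.truncn (x * b'.+1%:R)) b') => h.
  split; first by rewrite ltnS.
  by have /andP[-> /ltW ->] := truncn_itv xb0.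
split => //.
rewrite xb1 andbT.
have : (b'.+1 <= Num.truncn (x * b'.+1%:R))%N by [].
rewrite truncn_ge_nat // => h2; apply: le_trans h2; rewrite ler_nat //.
Qed.

Lemma entry_close (R : realType) (b Ln : nat) (x y : R) (g : nat) :
  (0 < b)%N -> 0 <= x <= 1 -> (natdist g (interval_index b x) < Ln)%N ->
  g%:R / b%:R <= y <= g.+1%:R / b%:R -> `|x - y| <= Ln%:R / b%:R.
Proof.
move=> b0 x01 hd /andP[y1 y2].
have [_ /andP[t1 t2]] := @index_bounds R b x b0 x01.
move: hd; set t := interval_index b x => hd.
have bpos : 0 < b%:R :> R by rewrite ltr0n.
rewrite ler_pdivrMr // in y1; rewrite ler_pdivlMr // in y2.
have h1 : (g < t + Ln)%N by move: hd; rewrite /natdist; lia.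
have h2 : (t < g + Ln)%N by move: hd; rewrite /natdist; lia.
have r1 : g.+1%:R <= t%:R + Ln%:R :> R by rewrite -natrD ler_nat.
have r2 : t.+1%:R <= g%:R + Ln%:R :> R by rewrite -natrD ler_nat.
rewrite -!natr1 in r1 r2 t2 y2.
rewrite ler_pdivlMr // -(gtr0_norm bpos) -normrM mulrBl ler_norml.
apply/andP; split; lra.
Qed.
Lemma L_facts (R : realType) (m n : nat) (delta : R) :
  (0 < m)%N -> (0 < n)%N -> 0 < delta < 1 ->
  exists Ln : nat, ceil_log2 ((m * n)%:R / delta) = Ln%:Z /\ (0 < Ln)%N /\
     (m * n)%:R / delta <= 2 ^+ Ln.
Proof.
move=> m0 n0 /andP[d0 d1].
set y := (m * n)%:R / delta.
have y1 : 1 < y.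
  rewrite /y ltr_pdivlMr // mul1r; apply: lt_le_trans d1 _.
  by rewrite ler1n muln_gt0 m0.
have ln2 : 0 < ln (2 : R) by apply: ln_gt0; lra.
have lny : 0 < ln y by apply: ln_gt0.
have cpos : 0 < ceil_log2 y by rewrite /ceil_log2 ceil_gt0 divr_gt0.
have hc := ceil_ge (ln y / ln 2).
rewrite -/(ceil_log2 y) in hc.
move: cpos hc; set c := ceil_log2 y => cpos hc.
have cE : c = `|c|%N%:Z by rewrite gez0_abs // ltW.
exists `|c|%N; split; first exact: cE.
split; first by rewrite -ltz_nat -cE.
rewrite cE ler_pdivrMr // in hc.
have y0 : 0 < y by lra.
rewrite -ler_ln ?posrE ?exprn_gt0 // ?lnXn //; last by lra.
Qed.

Lemma card_window (b s l : nat) : (s + l <= b)%N ->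
  (l <= #|[set g : 'I_b | (s <= g < s + l)%N]|)%N.
Proof.
case: b => [|b'] h; first by have -> : l = 0%N by lia.
have vK : forall j : 'I_l, val (inord (s + j) : 'I_b'.+1) = (s + j)%N.
  by move=> j; rewrite /= inordK //; have := ltn_ord j; lia.
have inj : injective (fun j : 'I_l => (inord (s + j) : 'I_b'.+1)).
  move=> j1 j2 /(congr1 val); rewrite !vK => /eqP; rewrite eqn_add2l => /eqP.
  exact: val_inj.
rewrite -[X in (X <= _)%N]card_ord -(card_imset _ inj).
apply: subset_leq_card; apply/fintype.subsetP => g /imsetP [j _ ->].
rewrite inE vK; have := ltn_ord j; lia.
Qed.

Theorem mainTheorem3 (R : realType) (m n b : nat) (X : 'M[R]_(m, n + n))
    (delta p : R)
    (wm : greenConfig m n b -> 'M[R]_(m, n + n)) :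
  (0 < m)%N -> (0 < n)%N ->
  (forall i c, 0 <= X i c <= 1) ->
  0 < delta < 1 ->
  ceil_log2 ((m * n)%:R / delta) <= (b%:Z) ->
  (forall G, valid_watermark X (wm G) G) ->
  1 <= p ->
  1 - delta <=
    prob_green R [pred G | Wp p X (wm G) <=
       Num.sqrt (n.*2)%:R * (ceil_log2 ((m * n)%:R / delta))%:~R / b%:R].
Proof.
move=> m0 n0 X01 d01 Lb Hwm p1.
have [Ln [LE [Ln0 L2]]] := @L_facts R m n delta m0 n0 d01.
rewrite LE in Lb *; rewrite lez_nat in Lb.
have b0 : (0 < b)%N by apply: leq_trans Ln0 Lb.
have bpos : 0 < b%:R :> R by rewrite ltr0n.
pose t (e : 'I_m * 'I_n) := interval_index b (X e.1 (rshift n e.2)).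
pose W (e : 'I_m * 'I_n) := [set g : 'I_b | (minn (t e) (b - Ln) <= g < minn (t e) (b - Ln) + Ln)%N].
pose bad := [set G : greenConfig m n b | has (fun e => G e :&: W e == finset.set0) (enum {: 'I_m * 'I_n})].
set E := [pred G | _].
have goodE : forall G, G \notin bad -> G \in E.
  move=> G; rewrite inE => /hasPn Hg; rewrite inE /=.
  rewrite -mulrA -addnn; apply: Wp_bound => //.

  move=> i c; case: (splitP c) => k Hk; [have -> : c = lshift n k by apply: val_inj | have -> : c = rshift n k by apply: val_inj].
    have [-> _] := Hwm G i k; by rewrite subrr normr0 divr_ge0 ?ler0n.
  have [_] := Hwm G i k.
  have x01 := X01 i (rshift n k).
  case: eqP => [_ ->|_ [g gG [gmin gy]]]; first by rewrite subrr normr0 divr_ge0 ?ler0n.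
  have := Hg (i, k); rewrite mem_enum => /(_ isT) /set0Pn [w]; rewrite !inE => /andP[wG wW].
  rewrite (_ : Ln%:~R = Ln%:R) //.
  apply: (@entry_close R b Ln _ _ g b0 x01 _ gy).
  apply: leq_ltn_trans (gmin w wG) _.
  have [tb _] := @index_bounds R b (X i (rshift n k)) b0 x01.
  move: wW tb; rewrite /t /=; set tt := interval_index b _ => wW tb.
  rewrite /natdist; lia.
have cnt : (#|bad| * 2 ^ Ln <= m * n * #|greenConfig m n b|)%N.
  have ub := @union_bound _ _ (fun e (G : greenConfig m n b) => G e :&: W e == finset.set0) (enum {: 'I_m * 'I_n}).
  have ub2 := leq_mul ub (leqnn (2 ^ Ln)).
  apply: leq_trans ub2 _.
  rewrite big_distrl /= big_enum /=.
  apply: leq_trans (_ : (\sum_(e in predT) #|greenConfig m n b| <= _)%N).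
    apply: leq_sum => e _; apply: leq_trans (@count_bad _ _ e (W e)).
    rewrite leq_mul2l leq_pexp2l ?orbT //.
    apply: card_window; lia.
  by rewrite sum_nat_const card_prod !card_ord.
have cover : (#|greenConfig m n b| <= #|E| + #|bad|)%N.
  rewrite -cardUI; apply: leq_trans (leq_addr _ _).
  apply: subset_leq_card; apply/fintype.subsetP => G _.
  apply/orP; case: (boolP (G \in bad)) => [Hb|/goodE HE]; [by right | by left].
rewrite /prob_green.
have A0 : (0 < #|greenConfig m n b|)%N.
  by apply/card_gt0P; exists [ffun => finset.set0].
move: cnt cover A0; set A := #|greenConfig m n b|; set Bd := #|bad|; set Ep := #|E|.
move=> cnt cover A0.
have Ar : 0 < A%:R :> R by rewrite ltr0n.
have cntR : Bd%:R * 2 ^+ Ln <= (m * n)%:R * A%:R :> R.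
  by rewrite -natrM -[2 ^+ Ln]natrX -natrM ler_nat.
have coverR : A%:R <= Ep%:R + Bd%:R :> R by rewrite -natrD ler_nat.
have [d0 d1] := andP d01.
have L2' : (m * n)%:R <= delta * 2 ^+ Ln.
  by move: L2; rewrite ler_pdivrMr // mulrC.
have p2 : 0 < 2 ^+ Ln :> R by rewrite exprn_gt0.
have BdR : Bd%:R <= delta * A%:R :> R.
  rewrite -(ler_pM2r p2); apply: le_trans cntR _.
  by rewrite mulrAC ler_pM2r.
rewrite ler_pdivlMr //; lra.
Qed.
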